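(* Let $n\in\mathbb{N}$. Then $K_{n,n}$ contains the derived subgroup $[F,F]$ of $F$.
   Context: Thompson's group $F$ is the group of piecewise linear homeomorphisms of $[0,1]$ with finitely many dyadic breakpoints and slopes integer powers of $2$. An element $h\in F$ has the pair of branches $u\rightarrow v$ (for finite binary words $u,v$) if $h(.u\alpha)=.v\alpha$ for every infinite binary word $\alpha$. For $H\le F$ write $u\sim_H v$ if some $h\in H$ has the pair of branches $u\rightarrow v$. The closure $\mathrm{Cl}(H)$ is the subgroup of all $f\in F$ for which there is a finite subdivision of $[0,1]$ into intervals on each of which $f$ coincides with some element of $H$; $H$ is closed if $H=\mathrm{Cl}(H)$ (intersections of closed subgroups are closed). $K_{n,n}$ is the minimal closed subgroup $K$ of $F$ such that: (a) $0^k1\sim_K 0^{k+n}1$ for all $k\in\mathbb{N}$; (b) $1^k0\sim_K 1^{k+n}0$ for all $k\in\mathbb{N}$; (c) $0^k1\sim_K 1^{n+1-k}0$ for $1\le k\le n$; (d) $0^{2k}10\sim_K 1^{1+3(n-k)}0$ for $1\le k\le n$; (e) $0^{2k}11\sim_K 1^{2+3(n-k)}0$ for $1\le k\le n$; (f) $0^{2k-1}1\sim_K 1^{3(n-k+1)}0$ for $1\le k\le n$. *)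

(* Defs.v *)
From Stdlib Require Import Reals ZArith List.
From Coquelicot Require Import Coquelicot.
Open Scope R_scope.

(* finite binary words: list bool (false = 0, true = 1);
   infinite binary words: nat -> bool *)
Fixpoint prepend (u : list bool) (a : nat -> bool) : nat -> bool :=
  match u with
  | nil => a
  | b :: u' => fun i => match i with O => b | S j => prepend u' a j end
  end.

Definition bin_val (a : nat -> bool) : R :=
  Series (fun i => if a i then (/ 2) ^ (S i) else 0).

Definition zeros (k : nat) : list bool := repeat false k.
Definition ones (k : nat) : list bool := repeat true k.

Definition dyadic (x : R) : Prop := exists (m : Z) (k : nat), x = IZR m / 2 ^ k.

Definition PL_dyadic (f : R -> R) : Prop :=
  exists (N : nat) (x : nat -> R) (a : nat -> Z) (b : nat -> R),
    x O = 0 /\ x N = 1 /\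
    (forall i, (i <= N)%nat -> dyadic (x i)) /\
    (forall i, (i < N)%nat -> x i < x (S i)) /\
    (forall i, (i < N)%nat -> forall t, x i <= t <= x (S i) ->
        f t = powerRZ 2 (a i) * t + b i).

Definition bij01 (f : R -> R) : Prop :=
  (forall x, 0 <= x <= 1 -> 0 <= f x <= 1) /\
  (forall x y, 0 <= x <= 1 -> 0 <= y <= 1 -> f x = f y -> x = y) /\
  (forall y, 0 <= y <= 1 -> exists x, 0 <= x <= 1 /\ f x = y).

(* Elements of F are represented by functions R -> R which are the identity
   outside [0,1] (so each element of F has a unique representative). *)
Definition inF (f : R -> R) : Prop :=
  (forall t, (t < 0 \/ 1 < t) -> f t = t) /\ bij01 f /\ PL_dyadic f.

Definition comp (f g : R -> R) : R -> R := fun x => f (g x).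

Definition is_subgroup (H : (R -> R) -> Prop) : Prop :=
  (forall f, H f -> inF f) /\
  H (fun x => x) /\
  (forall f g, H f -> H g -> H (comp f g)) /\
  (forall f, H f -> exists g, H g /\ forall x, g (f x) = x).

Definition has_branches (h : R -> R) (u v : list bool) : Prop :=
  forall a : nat -> bool, h (bin_val (prepend u a)) = bin_val (prepend v a).

Definition sim (H : (R -> R) -> Prop) (u v : list bool) : Prop :=
  exists h, H h /\ has_branches h u v.

Definition Cl (H : (R -> R) -> Prop) (f : R -> R) : Prop :=
  inF f /\
  exists (N : nat) (x : nat -> R),
    x O = 0 /\ x N = 1 /\
    (forall i, (i < N)%nat -> x i < x (S i)) /\
    (forall i, (i < N)%nat -> exists h, H h /\
        forall t, x i <= t <= x (S i) -> f t = h t).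

Definition is_closed (H : (R -> R) -> Prop) : Prop :=
  forall f, Cl H f -> H f.

Definition closed_subgroup (H : (R -> R) -> Prop) : Prop :=
  is_subgroup H /\ is_closed H.

Inductive derivedF : (R -> R) -> Prop :=
  | dF_comm : forall a a' b b', inF a -> inF b ->
      (forall x, a' (a x) = x) -> (forall x, b' (b x) = x) ->
      derivedF (comp a' (comp b' (comp a b)))
  | dF_id : derivedF (fun x => x)
  | dF_mul : forall f g, derivedF f -> derivedF g -> derivedF (comp f g)
  | dF_inv : forall f g, derivedF f -> (forall x, g (f x) = x) -> derivedF g.

Definition Knn_conditions (n : nat) (K : (R -> R) -> Prop) : Prop :=
  (forall k, (1 <= k)%nat ->
      sim K (zeros k ++ true :: nil) (zeros (k + n) ++ true :: nil)) /\
  (forall k, (1 <= k)%nat ->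
      sim K (ones k ++ false :: nil) (ones (k + n) ++ false :: nil)) /\
  (forall k, (1 <= k <= n)%nat ->
      sim K (zeros k ++ true :: nil) (ones (n + 1 - k) ++ false :: nil)) /\
  (forall k, (1 <= k <= n)%nat ->
      sim K (zeros (2 * k) ++ true :: false :: nil)
            (ones (1 + 3 * (n - k)) ++ false :: nil)) /\
  (forall k, (1 <= k <= n)%nat ->
      sim K (zeros (2 * k) ++ true :: true :: nil)
            (ones (2 + 3 * (n - k)) ++ false :: nil)) /\
  (forall k, (1 <= k <= n)%nat ->
      sim K (zeros (2 * k - 1) ++ true :: nil)
            (ones (3 * (n - k + 1)) ++ false :: nil)).

Definition is_Knn (n : nat) (K : (R -> R) -> Prop) : Prop :=
  closed_subgroup K /\ Knn_conditions n K /\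
  (forall K', closed_subgroup K' -> Knn_conditions n K' ->
     (forall f, K' f -> K f) -> forall f, K f -> K' f).

(* Main.v *)
Require Import Defs.
From Stdlib Require Import Reals ZArith List.
From Coquelicot Require Import Coquelicot.
From Stdlib Require Import Lra Lia IndefiniteDescription.
Open Scope R_scope.

Definition bterm (a : nat -> bool) (i : nat) : R := if a i then (/ 2) ^ (S i) else 0.

Lemma bterm_bound a i : 0 <= bterm a i <= (/2) ^ i.
Proof.
  unfold bterm. assert (0 < (/2)^i) by (apply pow_lt; lra).
  destruct (a i); simpl; lra.
Qed.

Lemma ex_bin a : ex_series (bterm a).
Proof.
  apply (@ex_series_le R_AbsRing R_CompleteNormedModule _ (fun i => (/2)^i)).
  - intro i. change (norm (bterm a i)) with (Rabs (bterm a i)). destruct (bterm_bound a i). rewrite Rabs_pos_eq; lra.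
  - apply ex_series_geom. rewrite Rabs_pos_eq; lra.
Qed.

Lemma bin_val_shift a :
  bin_val a = (if a 0%nat then /2 else 0) + bin_val (fun k => a (S k)) / 2.
Proof.
  unfold bin_val.
  change (fun i : nat => if a i then (/ 2) ^ S i else 0) with (bterm a).
  change (fun i : nat => if a (S i) then (/ 2) ^ S i else 0) with (bterm (fun k => a (S k))).
  rewrite (Series_incr_1 _ (ex_bin a)).
  rewrite (Series_ext (fun k => bterm a (S k)) (fun k => /2 * bterm (fun k => a (S k)) k)).
  - rewrite Series_scal_l. unfold bterm at 1. destruct (a 0%nat); simpl; lra.
  - intro k. unfold bterm. destruct (a (S k)); simpl; lra.
Qed.

Fixpoint val (u : list bool) : R :=
  match u with nil => 0 | b :: u' => (if b then /2 else 0) + val u' / 2 end.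

Lemma bin_val_prepend u a :
  bin_val (prepend u a) = val u + bin_val a / 2 ^ length u.
Proof.
  induction u as [|b u IH]; simpl.
  - lra.
  - rewrite bin_val_shift.
    change (fun k => prepend (b :: u) a (S k)) with (prepend u a). change (bin_val (fun k => prepend u a k)) with (bin_val (prepend u a)). rewrite IH.
    assert (0 < 2 ^ length u) by (apply pow_lt; lra). field. lra.
Qed.

Lemma prepend_app u w a : prepend (u ++ w) a = prepend u (prepend w a).
Proof. induction u as [|b u IH]; simpl; [reflexivity| rewrite IH; reflexivity]. Qed.

Fixpoint bseq (s : R) (i : nat) : R :=
  match i with
  | O => s
  | S j => let t := bseq s j in if Rle_dec 1 (2 * t) then 2 * t - 1 else 2 * t
  end.

Definition bexp (s : R) (i : nat) : bool := if Rle_dec 1 (2 * bseq s i) then true else false.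

Lemma bseq_range s : 0 <= s <= 1 -> forall i, 0 <= bseq s i <= 1.
Proof.
  intros Hs i; induction i; simpl; auto.
  destruct (Rle_dec 1 (2 * bseq s i)); lra.
Qed.

Lemma bexp_partial s : forall n,
  sum_f_R0 (bterm (bexp s)) n + bseq s (S n) / 2 ^ (S n) = s.
Proof.
  assert (key : forall i, bterm (bexp s) i + bseq s (S i) / 2 ^ S i = bseq s i / 2 ^ i).
  { intro i. unfold bterm, bexp. simpl.
    assert (0 < 2 ^ i) by (apply pow_lt; lra).
    rewrite <- Rinv_pow by lra.
    destruct (Rle_dec 1 (2 * bseq s i)); simpl; field; lra. }
  induction n.
  - simpl. specialize (key 0%nat). simpl in key. lra.
  - simpl sum_f_R0. specialize (key (S n)). lra.
Qed.

Lemma bin_val_surj s : 0 <= s <= 1 -> exists a, bin_val a = s.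
Proof.
  intro Hs. exists (bexp s). unfold bin_val.
  change (fun i : nat => if bexp s i then (/ 2) ^ S i else 0) with (bterm (bexp s)).
  apply is_series_unique. apply is_series_Reals.
  intros eps Heps.
  destruct (pow_lt_1_zero (/2)) with (y := eps) as [N HN].
  { rewrite Rabs_pos_eq; lra. } { exact Heps. }
  exists N. intros m Hm. unfold R_dist.
  pose proof (bexp_partial s m) as E.
  assert (E2 : sum_f_R0 (bterm (bexp s)) m - s = - (bseq s (S m) / 2 ^ S m)) by lra.
  rewrite E2, Rabs_Ropp.
  specialize (HN (S m) ltac:(lia)).
  rewrite Rabs_pos_eq in HN by (apply pow_le; lra).
  pose proof (bseq_range s Hs (S m)).
  assert (0 < 2 ^ S m) by (apply pow_lt; lra).
  rewrite Rabs_pos_eq.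
  - rewrite <- Rinv_pow in HN by lra.
    apply Rle_lt_trans with (/ 2 ^ S m); [|exact HN].
    unfold Rdiv. rewrite <- (Rmult_1_l (/ 2 ^ S m)) at 2.
    apply Rmult_le_compat_r; [left; apply Rinv_0_lt_compat; lra| lra].
  - apply Rmult_le_pos; [lra| left; apply Rinv_0_lt_compat; lra].
Qed.

Section Abs.
Local Open Scope Z_scope.
Variable E : Z -> Z -> Prop.
Hypothesis Erefl : forall x, E x x.
Hypothesis Esym : forall x y, E x y -> E y x.
Hypothesis Etrans : forall x y z, E x y -> E y z -> E x z.
Hypothesis EF : forall v, E (2*v) (3*v).
Hypothesis EC : forall v w, E (2*v+1) (2*w+1) -> E (3*v+1) (3*w+1) /\ E (3*v+2) (3*w+2).

Definition Per d := forall x, E x (x + d).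

Lemma Eeq x y : x = y -> E x y.
Proof. intros ->; apply Erefl. Qed.

Lemma Per_neg d : Per d -> Per (- d).
Proof. intros H x. apply Esym. specialize (H (x + - d)). now replace (x + - d + d) with x in H by ring. Qed.

Lemma Per_add a b : Per a -> Per b -> Per (a + b).
Proof. intros Ha Hb x. apply Etrans with (x + a); auto. replace (x + (a+b)) with ((x+a)+b) by ring. auto. Qed.

Lemma Per_nat d : Per d -> forall t : nat, Per (Z.of_nat t * d).
Proof.
  intros H t; induction t.
  - intro x. apply Eeq; ring.
  - replace (Z.of_nat (S t) * d) with (Z.of_nat t * d + d) by lia. now apply Per_add.
Qed.

Lemma Per_mul d : Per d -> forall t, Per (t * d).
Proof.
  intros H t. destruct (Z_le_gt_dec 0 t).
  - replace t with (Z.of_nat (Z.to_nat t)) by lia. now apply Per_nat.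
  - replace (t * d) with (- (Z.of_nat (Z.to_nat (- t)) * d)) by lia.
    apply Per_neg, Per_nat, H.
Qed.

Lemma Per_alpha d : Per (2 * d) -> Per d.
Proof.
  intro H2.
  assert (H3 : Per (3 * d)).
  { intro y. pose proof (Z.div_mod y 3 ltac:(lia)) as Hy.
    set (v := y / 3) in *. set (r := y mod 3) in *.
    assert (0 <= r < 3) by (apply Z.mod_pos_bound; lia).
    assert (r = 0 \/ r = 1 \/ r = 2) as [Hr|[Hr|Hr]] by lia; rewrite Hr in Hy.
    - apply Etrans with (2 * v). { apply Esym. apply Etrans with (3*v); [apply EF| apply Eeq; lia]. }
      apply Etrans with (2 * v + 2 * d); [apply H2|].
      apply Etrans with (3 * (v + d)); [replace (2*v+2*d) with (2*(v+d)) by ring; apply EF| apply Eeq; lia].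
    - destruct (EC v (v + d)) as [E1 _].
      + replace (2 * (v+d) + 1) with (2*v+1 + 2*d) by ring. apply H2.
      + apply Etrans with (3*v+1); [apply Eeq; lia|]. apply Etrans with (3*(v+d)+1); [exact E1|apply Eeq; lia].
    - destruct (EC v (v + d)) as [_ E1].
      + replace (2 * (v+d) + 1) with (2*v+1 + 2*d) by ring. apply H2.
      + apply Etrans with (3*v+2); [apply Eeq; lia|]. apply Etrans with (3*(v+d)+2); [exact E1|apply Eeq; lia]. }
  replace d with (3 * d + - (2 * d)) by ring. apply Per_add; auto. apply Per_neg; auto.
Qed.

Lemma Per_beta n d : Per n -> n mod 2 = 1 -> Per (3 * d) -> Per (2 * d).
Proof.
  intros Hn Hodd H3.
  assert (Hev : forall v, E (2*v) (2*v + 2*d)).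
  { intro v. apply Etrans with (3*v); [apply EF|].
    apply Etrans with (3*v+3*d); [apply H3|].
    apply Esym. replace (2*v+2*d) with (2*(v+d)) by ring.
    apply Etrans with (3*(v+d)); [apply EF| apply Eeq; ring]. }
  intro y. pose proof (Z.div_mod y 2 ltac:(lia)) as Hy.
  assert (0 <= y mod 2 < 2) by (apply Z.mod_pos_bound; lia).
  assert (y mod 2 = 0 \/ y mod 2 = 1) as [Hr|Hr] by lia; rewrite Hr in Hy.
  - rewrite Hy. replace (2 * (y/2) + 0) with (2 * (y/2)) by ring. apply Hev.
  - pose proof (Z.div_mod n 2 ltac:(lia)) as Hn2. rewrite Hodd in Hn2.
    apply Etrans with (y + n); [apply Hn|].
    apply Etrans with (y + n + 2 * d).
    + replace (y + n) with (2 * (y/2 + n/2 + 1)) by lia.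
      replace (y + n + 2*d) with (2 * (y/2 + n/2 + 1) + 2*d) by lia. apply Hev.
    + apply Esym. replace (y + n + 2*d) with (y + 2*d + n) by ring. apply Hn.
Qed.

Lemma Per_one_all : Per 1 -> forall x y, E x y.
Proof. intros H x y. replace y with (x + (y - x) * 1) by ring. apply (Per_mul 1 H). Qed.

Lemma Per_coprime6 n : 1 <= n -> Per n -> n mod 2 = 1 -> n mod 3 <> 0 -> Per 1.
Proof.
  intros Hn1 Hn Hodd H3.
  pose proof (Z.div_mod n 2 ltac:(lia)) as Hn2. rewrite Hodd in Hn2.
  set (h := n / 2 + 1).
  assert (Hh : n = 2 * h - 1) by lia.
  assert (Hu : exists u k, 3 * u = k * n + 1 /\ (k = 1 \/ k = 2)).
  { pose proof (Z.div_mod n 3 ltac:(lia)) as Hn3.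
    assert (0 <= n mod 3 < 3) by (apply Z.mod_pos_bound; lia).
    assert (n mod 3 = 1 \/ n mod 3 = 2) as [R|R] by lia; rewrite R in Hn3.
    - exists (2 * (n/3) + 1), 2. lia.
    - exists (n/3 + 1), 1. lia. }
  destruct Hu as [u [k [Hu Hk]]].
  assert (PN : forall t, Per (t * n)) by (intro t; apply Per_mul; auto).
  assert (G : forall y, E y (3 * h * y)).
  { intro y. apply Etrans with (2 * (h * y)).
    - specialize (PN y y). replace (2 * (h*y)) with (y + y * n) by (rewrite Hh; ring). exact PN.
    - apply Etrans with (3 * (h*y)); [apply EF| apply Eeq; ring]. }
  set (p := (3 * h - 1) * (3 * h - 1)).
  assert (HY : forall v, E (3 * h * (3 * (v - h) + 1)) (3 * h * (3 * (v - h) + 1) + p)).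
  { intro v.
    set (a := v - h). set (b := h * (3 * v - 1)).
    assert (Hab : E (2 * a + 1) (2 * b + 1)).
    { apply Etrans with (2 * v).
      - specialize (PN 1 (2*a+1)). replace (2*a+1 + 1 * n) with (2*v) in PN by (unfold a; rewrite Hh; ring). exact PN.
      - apply Etrans with (3 * v); [apply EF|].
        specialize (PN (3*v-1) (3*v)). replace (3*v + (3*v-1)*n) with (2*b+1) in PN by (unfold b; rewrite Hh; ring). exact PN. }
    destruct (EC a b Hab) as [E1 _].
    apply Etrans with (3 * a + 1); [apply Esym, G|].
    apply Etrans with (3 * b + 1); [exact E1|]. apply Eeq. unfold p, a, b. ring. }
  assert (Pp : Per p).
  { intro z. set (c := - 9 * h * h + 3 * h).
    set (v := 2 * u * u * (z - c)).
    set (t := (z - c) * (9 * u * u + k * (3 * u + 1))).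
    assert (HYz : 3 * h * (3 * (v - h) + 1) = z + t * n).
    { unfold v, t, c. 
      assert (3 * u - 1 = k * n) by lia.
      assert (Hx : 9 * u * u - 1 = k * n * (3 * u + 1)) by nia.
      nia. }
    apply Etrans with (3 * h * (3 * (v - h) + 1)).
    - rewrite HYz. apply PN.
    - apply Etrans with (3 * h * (3 * (v - h) + 1) + p); [apply HY|].
      rewrite HYz. apply Esym. replace (z + t * n + p) with (z + p + t * n) by ring. apply PN. }
  assert (H4 : 1 = 4 * p + - (9 * n + 6) * n) by (unfold p; rewrite Hh; ring).
  rewrite H4. apply Per_add; [apply Per_mul; auto| apply PN].
Qed.

Lemma abs_main : forall N : nat, forall n, 1 <= n <= Z.of_nat N -> Per n -> forall x y, E x y.
Proof.
  induction N as [|N IH]; intros n Hn HP; [lia|].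
  pose proof (Z.div_mod n 2 ltac:(lia)) as Hn2.
  assert (0 <= n mod 2 < 2) by (apply Z.mod_pos_bound; lia).
  destruct (Z.eq_dec n 1) as [->|Hne1]; [apply Per_one_all; auto|].
  assert (n mod 2 = 0 \/ n mod 2 = 1) as [R|R] by lia.
  - rewrite R in Hn2. apply (IH (n / 2)); [lia|].
    apply Per_alpha. replace (2 * (n/2)) with n by lia. exact HP.
  - pose proof (Z.div_mod n 3 ltac:(lia)) as Hn3.
    destruct (Z.eq_dec (n mod 3) 0) as [R3|R3].
    + rewrite R3 in Hn3. apply (IH (n / 3)); [lia|].
      apply Per_alpha. apply (Per_beta n); auto. replace (3 * (n/3)) with n by lia. exact HP.
    + apply Per_one_all. apply (Per_coprime6 n); auto; lia.
Qed.

End Abs.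

Section SimLemmas.
Variable K : (R -> R) -> Prop.
Hypothesis HK : is_subgroup K.

Lemma sim_refl u : sim K u u.
Proof. destruct HK as [_ [Hid _]]. exists (fun x => x). split; auto. intro a; reflexivity. Qed.

Lemma sim_sym u v : sim K u v -> sim K v u.
Proof.
  intros [h [Kh Bh]]. destruct HK as [_ [_ [_ Hinv]]].
  destruct (Hinv h Kh) as [g [Kg Hg]]. exists g; split; auto.
  intro a. rewrite <- (Bh a). apply Hg.
Qed.

Lemma sim_trans u v w : sim K u v -> sim K v w -> sim K u w.
Proof.
  intros [h [Kh Bh]] [g [Kg Bg]]. destruct HK as [_ [_ [Hc _]]].
  exists (comp g h); split; auto. intro a. unfold comp. rewrite Bh. apply Bg.
Qed.

Lemma sim_app u v w : sim K u v -> sim K (u ++ w) (v ++ w).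
Proof.
  intros [h [Kh Bh]]. exists h; split; auto. intro a.
  rewrite !prepend_app. apply Bh.
Qed.
End SimLemmas.
Arguments sim_refl {K} _ _.
Arguments sim_sym {K} _ _ _.
Arguments sim_trans {K} _ _ _ _.
Arguments sim_app {K} _ _ _ _.

Definition Zw (j : nat) : list bool := zeros j ++ true :: nil.
Definition Ow (j : nat) : list bool := ones j ++ false :: nil.

Section Comb.
Variable n : nat.
Hypothesis Hn : (1 <= n)%nat.
Variable K : (R -> R) -> Prop.
Hypothesis HK : is_subgroup K.
Hypothesis HC : Knn_conditions n K.

Let nz := Z.of_nat n.

Lemma ZA j t : (1 <= j)%nat -> sim K (Zw j) (Zw (j + t * n)).
Proof.
  intro Hj. induction t.
  - replace (j + 0 * n)%nat with j by lia. apply (sim_refl HK).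
  - apply (sim_trans HK) with (Zw (j + t * n)); auto.
    replace (j + S t * n)%nat with (j + t * n + n)%nat by lia.
    destruct HC as [Ha _]. apply Ha. lia.
Qed.

Lemma OA j t : (1 <= j)%nat -> sim K (Ow j) (Ow (j + t * n)).
Proof.
  intro Hj. induction t.
  - replace (j + 0 * n)%nat with j by lia. apply (sim_refl HK).
  - apply (sim_trans HK) with (Ow (j + t * n)); auto.
    replace (j + S t * n)%nat with (j + t * n + n)%nat by lia.
    destruct HC as [_ [Hb _]]. apply Hb. lia.
Qed.

Lemma cong_witness (j j' : nat) : (1 <= j <= j')%nat ->
  (Z.of_nat j mod nz = Z.of_nat j' mod nz)%Z -> exists t, j' = (j + t * n)%nat.
Proof.
  intros Hj Hm.
  pose proof (Z.div_mod (Z.of_nat j) nz ltac:(unfold nz; lia)) as E1.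
  pose proof (Z.div_mod (Z.of_nat j') nz ltac:(unfold nz; lia)) as E2.
  assert (Hq : (Z.of_nat j / nz <= Z.of_nat j' / nz)%Z).
  { apply Z.div_le_mono; unfold nz; lia. }
  exists (Z.to_nat (Z.of_nat j' / nz - Z.of_nat j / nz)).
  unfold nz in *. nia.
Qed.

Lemma Zcong j j' : (1 <= j)%nat -> (1 <= j')%nat ->
  (Z.of_nat j mod nz = Z.of_nat j' mod nz)%Z -> sim K (Zw j) (Zw j').
Proof.
  intros H1 H2 Hm. destruct (Nat.le_ge_cases j j').
  - destruct (cong_witness j j') as [t ->]; auto. apply ZA; auto.
  - destruct (cong_witness j' j) as [t ->]; auto. apply (sim_sym HK). apply ZA; auto.
Qed.

Lemma Ocong j j' : (1 <= j)%nat -> (1 <= j')%nat ->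
  (Z.of_nat j mod nz = Z.of_nat j' mod nz)%Z -> sim K (Ow j) (Ow j').
Proof.
  intros H1 H2 Hm. destruct (Nat.le_ge_cases j j').
  - destruct (cong_witness j j') as [t ->]; auto. apply OA; auto.
  - destruct (cong_witness j' j) as [t ->]; auto. apply (sim_sym HK). apply OA; auto.
Qed.

Definition Q (x : Z) : list bool := Zw (Z.to_nat (x mod nz) + 1).

Lemma mod_range x : (0 <= x mod nz < nz)%Z.
Proof. apply Z.mod_pos_bound. unfold nz; lia. Qed.

Lemma modeq a b t : (a = b + t * nz)%Z -> (a mod nz = b mod nz)%Z.
Proof. intros ->. apply Z_mod_plus_full. Qed.

Lemma Q_mod x y : (x mod nz = y mod nz)%Z -> Q x = Q y.
Proof. intro H; unfold Q; rewrite H; reflexivity. Qed.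

Lemma Q_shift x t : Q (x + t * nz) = Q x.
Proof. apply Q_mod. apply Z_mod_plus_full. Qed.

Lemma ZQ j : (1 <= j)%nat -> sim K (Zw j) (Q (Z.of_nat j - 1)).
Proof.
  intro Hj. unfold Q. pose proof (mod_range (Z.of_nat j - 1)).
  apply Zcong; [auto| lia|].
  rewrite Nat2Z.inj_add, Z2Nat.id by lia.
  rewrite Z.add_mod_idemp_l by (unfold nz; lia). f_equal. lia.
Qed.

Lemma OQ j : (1 <= j)%nat -> sim K (Ow j) (Q (- Z.of_nat j)).
Proof.
  intro Hj.
  set (r := ((Z.of_nat j - 1) mod nz)%Z).
  pose proof (mod_range (Z.of_nat j - 1)) as Hr. fold r in Hr.
  pose proof (Z.div_mod (Z.of_nat j - 1) nz ltac:(unfold nz; lia)) as Ej. fold r in Ej.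
  apply (sim_trans HK) with (Ow (Z.to_nat r + 1)).
  { apply Ocong; [auto|lia|].
    rewrite Nat2Z.inj_add, Z2Nat.id by lia.
    apply (modeq _ _ ((Z.of_nat j - 1) / nz)). lia. }
  apply (sim_trans HK) with (Zw (n - Z.to_nat r)).
  { apply (sim_sym HK). destruct HC as [_ [_ [Hc _]]].
    specialize (Hc (n - Z.to_nat r)%nat ltac:(unfold nz in *; lia)).
    replace (n + 1 - (n - Z.to_nat r))%nat with (Z.to_nat r + 1)%nat in Hc by (unfold nz in *; lia).
    exact Hc. }
  unfold Q. apply Zcong; [unfold nz in *; lia| lia|].
  pose proof (mod_range (- Z.of_nat j)).
  rewrite Nat2Z.inj_add, Z2Nat.id by lia.
  rewrite Z.add_mod_idemp_l by (unfold nz; lia).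
  apply (modeq _ _ ((Z.of_nat j - 1) / nz + 1)).
  unfold nz in *. rewrite Nat2Z.inj_sub by lia. rewrite Z2Nat.id by lia. lia.
Qed.

Definition EE (x y : Z) : Prop := sim K (Q x) (Q y).

Lemma Zw_app_eq m b : zeros m ++ true :: b :: nil = Zw m ++ b :: nil.
Proof. unfold Zw. rewrite <- app_assoc. reflexivity. Qed.

Lemma EE_F v : EE (2 * v) (3 * v).
Proof.
  set (r := (v mod nz)%Z). pose proof (mod_range v) as Hr. fold r in Hr.
  pose proof (Z.div_mod v nz ltac:(unfold nz; lia)) as Ev. fold r in Ev.
  set (k := (Z.to_nat r + 1)%nat).
  destruct HC as [_ [_ [_ [_ [_ Hf]]]]].
  specialize (Hf k ltac:(unfold k, nz in *; lia)).
  unfold EE.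
  apply (sim_trans HK) with (Zw (2 * k - 1)).
  { rewrite (Q_mod (2 * v) (Z.of_nat (2 * k - 1) - 1)).
    - apply (sim_sym HK). apply ZQ. lia.
    - rewrite Ev. unfold k. rewrite Nat2Z.inj_sub by lia. rewrite Nat2Z.inj_mul, Nat2Z.inj_add, Z2Nat.id by lia.
      replace (2 * (nz * (v / nz) + r))%Z with (2 * r + (2 * (v / nz)) * nz)%Z by ring.
      rewrite Z_mod_plus_full. f_equal. lia. }
  apply (sim_trans HK) with (Ow (3 * (n - k + 1))); [exact Hf|].
  apply (sim_trans HK) with (Q (- Z.of_nat (3 * (n - k + 1)))); [apply OQ; unfold k, nz in *; lia|].
  rewrite (Q_mod (- Z.of_nat (3 * (n - k + 1))) (3 * v)); [apply (sim_refl HK)|].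
  rewrite Ev. unfold k, nz in *.
  rewrite !Nat2Z.inj_mul, Nat2Z.inj_add, Nat2Z.inj_sub by lia. rewrite Nat2Z.inj_add, Z2Nat.id by lia.
  replace (- (Z.of_nat 3 * (Z.of_nat n - (r + Z.of_nat 1) + Z.of_nat 1)))%Z with (3 * r + (-3) * Z.of_nat n)%Z by lia.
  replace (3 * (Z.of_nat n * (v / Z.of_nat n) + r))%Z with (3 * r + (3 * (v / Z.of_nat n)) * Z.of_nat n)%Z by ring.
  rewrite !Z_mod_plus_full. reflexivity.
Qed.


Lemma EE_C v w : EE (2 * v + 1) (2 * w + 1) ->
  EE (3 * v + 1) (3 * w + 1) /\ EE (3 * v + 2) (3 * w + 2).
Proof.
  intro H.
  assert (key : forall v, exists k, (1 <= k <= n)%nat /\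
     sim K (Zw (2 * k)) (Q (2 * v + 1)) /\
     sim K (Zw (2 * k) ++ false :: nil) (Q (3 * v + 2)) /\
     sim K (Zw (2 * k) ++ true :: nil) (Q (3 * v + 1))).
  { clear v w H. intro v.
    set (r := (v mod nz)%Z). pose proof (mod_range v) as Hr. fold r in Hr.
    pose proof (Z.div_mod v nz ltac:(unfold nz; lia)) as Ev. fold r in Ev.
    set (k := (Z.to_nat r + 1)%nat). exists k.
    assert (Hk : (1 <= k <= n)%nat) by (unfold k, nz in *; lia).
    destruct HC as [_ [_ [_ [Hd [He _]]]]].
    split; [exact Hk|]. split; [|split].
    - apply (sim_trans HK) with (Q (Z.of_nat (2 * k) - 1)); [apply ZQ; lia|].
      rewrite (Q_mod _ (2 * v + 1)); [apply (sim_refl HK)|].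
      apply (modeq _ _ (- (v / nz) * 2)). unfold k, nz in *.
      rewrite Nat2Z.inj_mul, Nat2Z.inj_add, Z2Nat.id by lia. lia.
    - rewrite <- Zw_app_eq. apply (sim_trans HK) with (Ow (1 + 3 * (n - k))); [apply Hd; auto|].
      apply (sim_trans HK) with (Q (- Z.of_nat (1 + 3 * (n - k)))); [apply OQ; lia|].
      rewrite (Q_mod _ (3 * v + 2)); [apply (sim_refl HK)|].
      apply (modeq _ _ (- (v / nz) * 3 - 3)). unfold k, nz in *.
      rewrite Nat2Z.inj_add, Nat2Z.inj_mul, Nat2Z.inj_sub by lia.
      rewrite Nat2Z.inj_add, Z2Nat.id by lia. lia.
    - rewrite <- Zw_app_eq. apply (sim_trans HK) with (Ow (2 + 3 * (n - k))); [apply He; auto|].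
      apply (sim_trans HK) with (Q (- Z.of_nat (2 + 3 * (n - k)))); [apply OQ; lia|].
      rewrite (Q_mod _ (3 * v + 1)); [apply (sim_refl HK)|].
      apply (modeq _ _ (- (v / nz) * 3 - 3)). unfold k, nz in *.
      rewrite Nat2Z.inj_add, Nat2Z.inj_mul, Nat2Z.inj_sub by lia.
      rewrite Nat2Z.inj_add, Z2Nat.id by lia. lia. }
  destruct (key v) as [k [_ [A1 [A2 A3]]]].
  destruct (key w) as [l [_ [B1 [B2 B3]]]].
  assert (S0 : sim K (Zw (2 * k)) (Zw (2 * l))).
  { apply (sim_trans HK) with (Q (2 * v + 1)); auto.
    apply (sim_trans HK) with (Q (2 * w + 1)); auto. apply (sim_sym HK); auto. }
  unfold EE. split.
  - apply (sim_trans HK) with (Zw (2 * k) ++ true :: nil); [apply (sim_sym HK); auto|].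
    apply (sim_trans HK) with (Zw (2 * l) ++ true :: nil); [apply sim_app; auto| auto].
  - apply (sim_trans HK) with (Zw (2 * k) ++ false :: nil); [apply (sim_sym HK); auto|].
    apply (sim_trans HK) with (Zw (2 * l) ++ false :: nil); [apply sim_app; auto| auto].
Qed.

Lemma EE_total x y : EE x y.
Proof.
  apply (abs_main EE) with (N := n) (n := nz).
  - intro; apply (sim_refl HK).
  - intros; apply (sim_sym HK); auto.
  - intros a b c; apply (sim_trans HK).
  - apply EE_F.
  - apply EE_C.
  - unfold nz; lia.
  - intro z. unfold EE. replace (z + nz)%Z with (z + 1 * nz)%Z by ring. rewrite Q_shift. apply (sim_refl HK).
Qed.

Lemma Zw_all j : (1 <= j)%nat -> sim K (Zw j) (Zw 2).
Proof.
  intro Hj. apply (sim_trans HK) with (Q (Z.of_nat j - 1)); [apply ZQ; auto|].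
  apply (sim_trans HK) with (Q (Z.of_nat 2 - 1)); [apply EE_total|].
  apply (sim_sym HK). apply ZQ. lia.
Qed.

Lemma Ow_all j : (1 <= j)%nat -> sim K (Ow j) (Zw 2).
Proof.
  intro Hj. apply (sim_trans HK) with (Q (- Z.of_nat j)); [apply OQ; auto|].
  apply (sim_trans HK) with (Q (Z.of_nat 2 - 1)); [apply EE_total|].
  apply (sim_sym HK). apply ZQ. lia.
Qed.

Lemma Zw2_child b : sim K (Zw 2 ++ b :: nil) (Zw 2).
Proof.
  destruct HC as [_ [_ [_ [Hd [He _]]]]].
  destruct b; rewrite <- Zw_app_eq.
  - apply (sim_trans HK) with (Ow (2 + 3 * (n - 1))); [apply (He 1%nat); lia|]. apply Ow_all; lia.
  - apply (sim_trans HK) with (Ow (1 + 3 * (n - 1))); [apply (Hd 1%nat); lia|]. apply Ow_all; lia.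
Qed.

Lemma Zw2_ext w : sim K (Zw 2 ++ w) (Zw 2).
Proof.
  induction w as [|b w IH].
  - rewrite app_nil_r. apply (sim_refl HK).
  - apply (sim_trans HK) with (Zw 2 ++ w); auto.
    replace (Zw 2 ++ b :: w) with ((Zw 2 ++ b :: nil) ++ w) by (rewrite <- app_assoc; reflexivity).
    apply sim_app. apply Zw2_child.
Qed.

Lemma lead_split (b : bool) u : In b u -> exists j w, u = repeat (negb b) j ++ b :: w.
Proof.
  induction u as [|c u IH]; simpl; [tauto|].
  intros [->|Hin].
  - exists 0%nat, u. reflexivity.
  - destruct (Bool.bool_dec c b) as [->|Hne].
    + exists 0%nat, u. reflexivity.
    + destruct (IH Hin) as [j [w ->]]. exists (S j), w. simpl.
      f_equal. destruct b, c; simpl; congruence.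
Qed.

Lemma nb_sim u : In true u -> In false u -> sim K u (Zw 2).
Proof.
  intros Ht Hf. destruct u as [|c u]; [destruct Ht|].
  destruct c.
  - destruct (lead_split false (true :: u)) as [j [w Hu]]; [exact Hf|].
    destruct j as [|j]; [simpl in Hu; discriminate|].
    rewrite Hu. replace (repeat (negb false) (S j) ++ false :: w) with (Ow (S j) ++ w)
      by (unfold Ow, ones; simpl; rewrite <- app_assoc; reflexivity).
    apply (sim_trans HK) with (Zw 2 ++ w); [apply sim_app; apply Ow_all; lia| apply Zw2_ext].
  - destruct (lead_split true (false :: u)) as [j [w Hu]]; [exact Ht|].
    destruct j as [|j]; [simpl in Hu; discriminate|].
    rewrite Hu. replace (repeat (negb true) (S j) ++ true :: w) with (Zw (S j) ++ w)
      by (unfold Zw, zeros; simpl; rewrite <- app_assoc; reflexivity).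
    apply (sim_trans HK) with (Zw 2 ++ w); [apply sim_app; apply Zw_all; lia| apply Zw2_ext].
Qed.

End Comb.

Definition zp (N : nat) : Z := (2 ^ Z.of_nat N)%Z.

Lemma IZR_zp N : IZR (zp N) = 2 ^ N.
Proof. unfold zp. rewrite <- pow_IZR. reflexivity. Qed.

Lemma zp_pos N : (0 < zp N)%Z.
Proof. unfold zp. apply Z.pow_pos_nonneg; lia. Qed.

Lemma zp_S N : zp (S N) = (2 * zp N)%Z.
Proof. unfold zp. rewrite Nat2Z.inj_succ, Z.pow_succ_r by lia. ring. Qed.

Lemma zp_add N d : zp (N + d) = (zp N * zp d)%Z.
Proof. unfold zp. rewrite Nat2Z.inj_add, Z.pow_add_r by lia. ring. Qed.

Lemma p2_pos N : 0 < 2 ^ N.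
Proof. apply pow_lt; lra. Qed.

Lemma powerRZ_2_pos z : 0 < powerRZ 2 z.
Proof. apply powerRZ_lt. lra. Qed.

Lemma powerRZ_sub (N M : nat) : powerRZ 2 (Z.of_nat N - Z.of_nat M) = 2 ^ N / 2 ^ M.
Proof.
  unfold Z.sub. rewrite powerRZ_add by lra. rewrite powerRZ_neg'.
  rewrite <- !pow_powerRZ. reflexivity.
Qed.

(* f maps the standard dyadic cell (N,i) affinely onto the cell (M,p) *)
Definition maps (f : R -> R) (N : nat) (i : Z) (M : nat) (p : Z) : Prop :=
  forall t, IZR i / 2 ^ N <= t <= (IZR i + 1) / 2 ^ N ->
    f t = IZR p / 2 ^ M + (t - IZR i / 2 ^ N) * 2 ^ N / 2 ^ M.

Definition TP (f : R -> R) (N L : nat) : Prop :=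
  forall i, (0 <= i < zp N)%Z -> exists M p, (L <= M)%nat /\ maps f N i M p.

Lemma maps_refine f N i M p r : maps f N i M p -> (r = 0 \/ r = 1)%Z ->
  maps f (S N) (2 * i + r) (S M) (2 * p + r).
Proof.
  intros H Hr t Ht.
  pose proof (p2_pos N). pose proof (p2_pos M).
  simpl pow in *. rewrite !plus_IZR, !mult_IZR in *.
  assert (0 <= IZR r <= 1) by (destruct Hr as [->| ->]; simpl; lra).
  rewrite H.
  - field. lra.
  - split.
    + apply Rle_trans with ((2 * IZR i + IZR r) / (2 * 2 ^ N)); [|lra].
      unfold Rdiv. rewrite Rinv_mult. 
      apply Rmult_le_reg_r with (2 * 2^N); [lra|].
      field_simplify; lra.
    + apply Rle_trans with ((2 * IZR i + IZR r + 1) / (2 * 2 ^ N)); [lra|].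
      apply Rmult_le_reg_r with (2 * 2^N); [lra|].
      field_simplify; lra.
Qed.

Lemma TP_refine f N L : TP f N L -> TP f (S N) (S L).
Proof.
  intros H i' Hi'. rewrite zp_S in Hi'.
  pose proof (Z.div_mod i' 2 ltac:(lia)) as E.
  pose proof (Z.mod_pos_bound i' 2 ltac:(lia)) as Hr.
  destruct (H (i' / 2)%Z) as [M [p [HL Hm]]]; [lia|].
  exists (S M), (2 * p + i' mod 2)%Z. split; [lia|].
  rewrite E at 1. apply maps_refine; auto. lia.
Qed.

Lemma TP_refine_d f N L d : TP f N L -> TP f (N + d) (L + d).
Proof.
  intro H. induction d.
  - now rewrite !Nat.add_0_r.
  - rewrite !Nat.add_succ_r. now apply TP_refine.
Qed.

Lemma TP_weaken f N L L' : TP f N L -> (L' <= L)%nat -> TP f N L'.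
Proof. intros H HL i Hi. destruct (H i Hi) as [M [p [? ?]]]. exists M, p. split; auto; lia. Qed.

Lemma cell_of N x : 0 <= x <= 1 -> exists i, (0 <= i < zp N)%Z /\ IZR i / 2 ^ N <= x <= (IZR i + 1) / 2 ^ N.
Proof.
  intro Hx. induction N.
  - exists 0%Z. unfold zp. simpl. split; [lia|]. lra.
  - destruct IHN as [i [Hi [H1 H2]]].
    pose proof (p2_pos N). rewrite zp_S. simpl pow.
    destruct (Rle_dec x ((2 * IZR i + 1) / (2 * 2 ^ N))).
    + exists (2 * i)%Z. split; [lia|]. rewrite mult_IZR. split; [|lra].
      replace (2 * IZR i / (2 * 2 ^ N)) with (IZR i / 2 ^ N) by (field; lra). lra.
    + exists (2 * i + 1)%Z. split; [lia|]. rewrite plus_IZR, mult_IZR. split; [lra|].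
      replace ((2 * IZR i + 1 + 1) / (2 * 2 ^ N)) with ((IZR i + 1) / 2 ^ N) by (field; lra). lra.
Qed.

Lemma finite_bound (P : Z -> nat -> Z -> Prop) (B : nat) :
  (forall i, (0 <= i < Z.of_nat B)%Z -> exists M p, P i M p) ->
  exists Lb, forall i, (0 <= i < Z.of_nat B)%Z -> exists M p, (M <= Lb)%nat /\ P i M p.
Proof.
  induction B; intro H.
  - exists 0%nat. intros i Hi; lia.
  - destruct IHB as [Lb HLb]. { intros i Hi. apply H. lia. }
    destruct (H (Z.of_nat B)) as [M0 [p0 H0]]; [lia|].
    exists (Nat.max Lb M0). intros i Hi.
    destruct (Z.eq_dec i (Z.of_nat B)) as [->|Hne].
    + exists M0, p0. split; auto; lia.
    + destruct (HLb i ltac:(lia)) as [M [p [HM HP]]]. exists M, p. split; auto; lia.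
Qed.

Lemma TP_bound f N L : TP f N L -> exists Lb, forall i, (0 <= i < zp N)%Z ->
  exists M p, (L <= M <= Lb)%nat /\ maps f N i M p.
Proof.
  intro H.
  destruct (finite_bound (fun i M p => (L <= M)%nat /\ maps f N i M p) (Z.to_nat (zp N))) as [Lb HLb].
  { intros i Hi. apply H. pose proof (zp_pos N). lia. }
  exists Lb. intros i Hi. destruct (HLb i) as [M [p [? [? ?]]]]. { pose proof (zp_pos N); lia. }
  exists M, p. split; [lia|auto].
Qed.

Lemma div_le_mul a b c : 0 < c -> a / c <= b -> a <= b * c.
Proof. intros Hc H. apply Rmult_le_compat_r with (r := c) in H; [|lra]. field_simplify in H; lra. Qed.

Lemma le_div_mul a b c : 0 < c -> a <= b / c -> a * c <= b.
Proof. intros Hc H. apply Rmult_le_compat_r with (r := c) in H; [|lra]. field_simplify in H; lra. Qed.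

Lemma mul_le_div a b c : 0 < c -> a <= b * c -> a / c <= b.
Proof. intros Hc H. apply Rmult_le_reg_r with c; [lra|]. field_simplify; lra. Qed.

Lemma mul_div_le a b c : 0 < c -> a * c <= b -> a <= b / c.
Proof. intros Hc H. apply Rmult_le_reg_r with c; [lra|]. field_simplify; lra. Qed.

Lemma cell_mul N i t : IZR i / 2 ^ N <= t <= (IZR i + 1) / 2 ^ N -> IZR i <= t * 2 ^ N <= IZR i + 1.
Proof. pose proof (p2_pos N). intros [H1 H2]. split; [apply div_le_mul|apply le_div_mul]; auto. Qed.

Lemma cell_range N i : (0 <= i < zp N)%Z -> 0 <= IZR i / 2 ^ N /\ (IZR i + 1) / 2 ^ N <= 1.
Proof.
  intro Hi. pose proof (p2_pos N).
  assert (0 <= IZR i) by (apply IZR_le; lia).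
  assert (IZR i + 1 <= 2 ^ N) by (rewrite <- IZR_zp; rewrite <- plus_IZR; apply IZR_le; lia).
  split.
  - apply Rmult_le_pos; [lra| left; apply Rinv_0_lt_compat; lra].
  - apply Rmult_le_reg_r with (2^N); [lra|]. field_simplify; lra.
Qed.

Lemma maps_image_range f N i M p : (0 <= i < zp N)%Z -> maps f N i M p ->
  (forall t, 0 <= t <= 1 -> 0 <= f t <= 1) -> (0 <= p /\ p + 1 <= zp M)%Z.
Proof.
  intros Hi Hm Hr. pose proof (p2_pos N). pose proof (p2_pos M).
  destruct (cell_range N i Hi) as [A B].
  assert (C : IZR i / 2 ^ N <= (IZR i + 1) / 2 ^ N).
  { apply Rmult_le_compat_r; [left; apply Rinv_0_lt_compat; lra| lra]. }
  pose proof (Hm (IZR i / 2 ^ N) ltac:(lra)) as E1.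
  pose proof (Hm ((IZR i + 1) / 2 ^ N) ltac:(lra)) as E2.
  pose proof (Hr (IZR i / 2 ^ N) ltac:(lra)) as R1.
  pose proof (Hr ((IZR i + 1) / 2 ^ N) ltac:(lra)) as R2.
  replace ((IZR i / 2 ^ N - IZR i / 2 ^ N) * 2 ^ N / 2 ^ M) with 0 in E1 by (field; lra).
  replace (((IZR i + 1) / 2 ^ N - IZR i / 2 ^ N) * 2 ^ N / 2 ^ M) with (1 / 2 ^ M) in E2 by (field; lra).
  rewrite E1 in R1. rewrite E2 in R2. split.
  - apply le_IZR. apply Rmult_le_reg_r with (/ 2 ^ M); [apply Rinv_0_lt_compat; lra|]. lra.
  - apply le_IZR. rewrite plus_IZR, IZR_zp.
    apply Rmult_le_reg_r with (/ 2 ^ M); [apply Rinv_0_lt_compat; lra|].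
    rewrite Rinv_r by lra. unfold Rdiv in R2. simpl. lra.
Qed.

Lemma TP_comp f g Nf Ng : TP f Nf 0 -> TP g Ng 0 ->
  (forall t, 0 <= t <= 1 -> 0 <= g t <= 1) -> TP (comp f g) (Ng + Nf) 0.
Proof.
  intros Hf Hg Hr.
  pose proof (TP_refine_d g Ng 0 Nf Hg) as Hg'. simpl in Hg'.
  intros i Hi. destruct (Hg' i Hi) as [M [p [HM Hm]]].
  destruct (maps_image_range g _ i M p Hi Hm Hr) as [Hp1 Hp2].
  set (e := (M - Nf)%nat).
  assert (HMe : M = (Nf + e)%nat) by (unfold e; lia).
  rewrite HMe, zp_add in Hp2.
  pose proof (zp_pos e). pose proof (zp_pos Nf).
  set (j := (p / zp e)%Z).
  pose proof (Z.div_mod p (zp e) ltac:(lia)) as Ep. fold j in Ep.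
  pose proof (Z.mod_pos_bound p (zp e) ltac:(lia)) as Bp.
  assert (Hj : (0 <= j < zp Nf)%Z) by nia.
  destruct (Hf j Hj) as [Mj [qj [_ Hmj]]].
  exists (Mj + e)%nat, (qj * zp e + (p - j * zp e))%Z. split; [lia|].
  intros t Ht. unfold comp.
  set (N := (Ng + Nf)%nat) in *.
  pose proof (p2_pos N). pose proof (p2_pos M). pose proof (p2_pos Nf). pose proof (p2_pos e). pose proof (p2_pos Mj).
  assert (HM2 : 2 ^ M = 2 ^ Nf * 2 ^ e) by (rewrite HMe, pow_add; reflexivity).
  assert (Hjl : IZR j * 2 ^ e <= IZR p) by (rewrite <- IZR_zp, <- mult_IZR; apply IZR_le; lia).
  assert (Hjr : IZR p + 1 <= (IZR j + 1) * 2 ^ e) by (rewrite <- IZR_zp, <- plus_IZR, <- plus_IZR, <- mult_IZR; apply IZR_le; lia).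
  set (s := g t).
  assert (Hs : s = IZR p / 2 ^ M + (t - IZR i / 2 ^ N) * 2 ^ N / 2 ^ M) by (apply Hm; auto).
  assert (Hs1 : IZR p / 2 ^ M <= s <= (IZR p + 1) / 2 ^ M).
  { rewrite Hs. split.
    - assert (0 <= (t - IZR i / 2 ^ N) * 2 ^ N / 2 ^ M); [|lra].
      apply Rmult_le_pos; [apply Rmult_le_pos; lra| left; apply Rinv_0_lt_compat; lra].
    - assert ((t - IZR i / 2 ^ N) * 2 ^ N <= 1).
      { destruct (cell_mul N i t Ht). replace ((t - IZR i / 2 ^ N) * 2 ^ N) with (t * 2 ^ N - IZR i) by (field; lra). lra. }
      assert ((t - IZR i / 2 ^ N) * 2 ^ N / 2 ^ M <= 1 / 2 ^ M).
      { unfold Rdiv at 1 3. apply Rmult_le_compat_r; [left; apply Rinv_0_lt_compat; lra | lra]. }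
      replace ((IZR p + 1) / 2 ^ M) with (IZR p / 2 ^ M + 1 / 2 ^ M) by (field; lra). lra. }
  assert (Hcell : IZR j / 2 ^ Nf <= s <= (IZR j + 1) / 2 ^ Nf).
  { rewrite HM2 in Hs1. split.
    - apply Rle_trans with (IZR p / (2 ^ Nf * 2 ^ e)); [|lra].
      apply Rmult_le_reg_r with (2 ^ Nf * 2 ^ e); [nra|]. field_simplify; lra.
    - apply Rle_trans with ((IZR p + 1) / (2 ^ Nf * 2 ^ e)); [lra|].
      apply Rmult_le_reg_r with (2 ^ Nf * 2 ^ e); [nra|]. field_simplify; lra. }
  rewrite (Hmj s Hcell). rewrite Hs. rewrite HM2.
  rewrite plus_IZR, minus_IZR, !mult_IZR, IZR_zp, pow_add.
  field. lra.
Qed.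

Lemma subcell M e p q s : (IZR p * 2 ^ e <= IZR q) -> (IZR q + 1 <= (IZR p + 1) * 2 ^ e) ->
  IZR q / 2 ^ (M + e) <= s <= (IZR q + 1) / 2 ^ (M + e) ->
  IZR p / 2 ^ M <= s <= (IZR p + 1) / 2 ^ M.
Proof.
  intros H1 H2 [H3 H4]. pose proof (p2_pos M). pose proof (p2_pos e). rewrite pow_add in *.
  split.
  - apply Rle_trans with (IZR q / (2 ^ M * 2 ^ e)); auto.
    apply mul_div_le; [nra|]. replace (IZR p / 2 ^ M * (2 ^ M * 2 ^ e)) with (IZR p * 2 ^ e) by (field; lra). lra.
  - apply Rle_trans with ((IZR q + 1) / (2 ^ M * 2 ^ e)); auto.
    apply mul_le_div; [nra|]. replace ((IZR p + 1) / 2 ^ M * (2 ^ M * 2 ^ e)) with ((IZR p + 1) * 2 ^ e) by (field; lra). lra.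
Qed.

Lemma maps_range f N i M p t : maps f N i M p -> IZR i / 2 ^ N <= t <= (IZR i + 1) / 2 ^ N ->
  IZR p / 2 ^ M <= f t <= (IZR p + 1) / 2 ^ M.
Proof.
  intros Hm Ht. rewrite (Hm t Ht). pose proof (p2_pos N). pose proof (p2_pos M).
  destruct (cell_mul N i t Ht).
  replace ((t - IZR i / 2 ^ N) * 2 ^ N / 2 ^ M) with ((t * 2 ^ N - IZR i) / 2 ^ M) by (field; lra).
  assert (0 <= (t * 2 ^ N - IZR i) / 2 ^ M <= 1 / 2 ^ M).
  { split; [apply Rmult_le_pos; [lra| left; apply Rinv_0_lt_compat; lra]|].
    unfold Rdiv. apply Rmult_le_compat_r; [left; apply Rinv_0_lt_compat; lra| lra]. }
  replace ((IZR p + 1) / 2 ^ M) with (IZR p / 2 ^ M + 1 / 2 ^ M) by (field; lra). lra.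
Qed.

Lemma TP_inv f g N : TP f N 0 -> bij01 f -> (forall x, g (f x) = x) -> exists L, TP g L 0.
Proof.
  intros Hf [Hr [Hinj Hsurj]] Hg.
  destruct (TP_bound f N 0 Hf) as [L HL]. exists L.
  intros q Hq.
  pose proof (p2_pos L).
  assert (Hy : 0 <= (IZR q + / 2) / 2 ^ L <= 1).
  { destruct (cell_range L q Hq). split.
    - apply Rmult_le_pos; [|left; apply Rinv_0_lt_compat; lra].
      assert (0 <= IZR q) by (apply IZR_le; lia). lra.
    - apply Rle_trans with ((IZR q + 1) / 2 ^ L); auto.
      unfold Rdiv. apply Rmult_le_compat_r; [left; apply Rinv_0_lt_compat; lra| lra]. }
  destruct (Hsurj _ Hy) as [x [Hx Hfx]].
  destruct (cell_of N x Hx) as [i [Hi Hxi]].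
  destruct (HL i Hi) as [M [p [HM Hm]]].
  set (e := (L - M)%nat). assert (HLe : L = (M + e)%nat) by (unfold e; lia).
  pose proof (p2_pos M). pose proof (p2_pos e). pose proof (p2_pos N).
  pose proof (maps_range f N i M p x Hm Hxi) as Rx. rewrite Hfx in Rx.
  rewrite HLe, pow_add in Rx.
  assert (A1 : IZR p * 2 ^ e <= IZR q + / 2).
  { destruct Rx as [Rx _]. apply (Rmult_le_compat_r (2 ^ M * 2 ^ e)) in Rx; [|nra].
    replace (IZR p / 2 ^ M * (2 ^ M * 2 ^ e)) with (IZR p * 2 ^ e) in Rx by (field; lra).
    replace ((IZR q + / 2) / (2 ^ M * 2 ^ e) * (2 ^ M * 2 ^ e)) with (IZR q + / 2) in Rx by (field; lra). lra. }
  assert (A2 : IZR q + / 2 <= (IZR p + 1) * 2 ^ e).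
  { destruct Rx as [_ Rx]. apply (Rmult_le_compat_r (2 ^ M * 2 ^ e)) in Rx; [|nra].
    replace ((IZR p + 1) / 2 ^ M * (2 ^ M * 2 ^ e)) with ((IZR p + 1) * 2 ^ e) in Rx by (field; lra).
    replace ((IZR q + / 2) / (2 ^ M * 2 ^ e) * (2 ^ M * 2 ^ e)) with (IZR q + / 2) in Rx by (field; lra). lra. }
  rewrite <- IZR_zp, <- mult_IZR in A1. rewrite <- IZR_zp, <- plus_IZR, <- mult_IZR in A2.
  assert (Z1 : (p * zp e <= q)%Z).
  { destruct (Z_le_gt_dec (p * zp e) q); auto. exfalso.
    assert (IZR q + 1 <= IZR (p * zp e)) by (rewrite <- plus_IZR; apply IZR_le; lia). lra. }
  assert (Z2 : (q + 1 <= (p + 1) * zp e)%Z).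
  { destruct (Z_le_gt_dec (q + 1) ((p+1) * zp e)); auto. exfalso.
    assert (IZR ((p+1) * zp e) <= IZR q) by (apply IZR_le; lia). lra. }
  exists (N + e)%nat, (i * zp e + (q - p * zp e))%Z. split; [lia|].
  intros s Hs.
  assert (Hs' : IZR p / 2 ^ M <= s <= (IZR p + 1) / 2 ^ M).
  { apply (subcell M e p q s).
    - rewrite <- IZR_zp, <- mult_IZR. apply IZR_le; lia.
    - rewrite <- IZR_zp, <- plus_IZR, <- plus_IZR, <- mult_IZR. apply IZR_le; lia.
    - rewrite <- HLe. exact Hs. }
  set (x' := IZR i / 2 ^ N + (s - IZR p / 2 ^ M) * 2 ^ M / 2 ^ N).
  assert (Hx' : IZR i / 2 ^ N <= x' <= (IZR i + 1) / 2 ^ N).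
  { destruct (cell_mul M p s Hs'). unfold x'.
    replace ((s - IZR p / 2 ^ M) * 2 ^ M / 2 ^ N) with ((s * 2 ^ M - IZR p) / 2 ^ N) by (field; lra).
    assert (0 <= (s * 2 ^ M - IZR p) / 2 ^ N <= 1 / 2 ^ N).
    { split; [apply Rmult_le_pos; [lra| left; apply Rinv_0_lt_compat; lra]|].
      unfold Rdiv. apply Rmult_le_compat_r; [left; apply Rinv_0_lt_compat; lra| lra]. }
    replace ((IZR i + 1) / 2 ^ N) with (IZR i / 2 ^ N + 1 / 2 ^ N) by (field; lra). lra. }
  assert (Hfx' : f x' = s).
  { rewrite (Hm x' Hx'). unfold x'. field. lra. }
  replace (g s) with x' by (rewrite <- Hfx'; symmetry; apply Hg). unfold x'. rewrite HLe.
  rewrite plus_IZR, minus_IZR, !mult_IZR, IZR_zp, !pow_add. field. lra.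
Qed.

Definition lvl (L : nat) (x : R) : Prop := exists z, x = IZR z / 2 ^ L.

Lemma lvl_up L d x : lvl L x -> lvl (L + d) x.
Proof.
  intros [z ->]. exists (z * zp d)%Z. rewrite mult_IZR, IZR_zp, pow_add.
  pose proof (p2_pos L); pose proof (p2_pos d). field. lra.
Qed.

Lemma lvl_mono L L' x : (L <= L')%nat -> lvl L x -> lvl L' x.
Proof. intros H Hx. replace L' with (L + (L' - L))%nat by lia. now apply lvl_up. Qed.

Lemma dyadic_lvl x : dyadic x -> exists L, lvl L x.
Proof. intros [m [k ->]]. exists k, m. reflexivity. Qed.

Lemma lvl_dyadic L x : lvl L x -> dyadic x.
Proof. intros [z ->]. exists z, L. reflexivity. Qed.

Lemma dyadic_add x y : dyadic x -> dyadic y -> dyadic (x + y).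
Proof.
  intros Hx Hy. destruct (dyadic_lvl x Hx) as [L1 H1]. destruct (dyadic_lvl y Hy) as [L2 H2].
  apply (lvl_up L1 L2) in H1. apply (lvl_mono L2 (L1 + L2)) in H2; [|lia].
  destruct H1 as [z1 E1]; destruct H2 as [z2 E2]. exists (z1 + z2)%Z, (L1 + L2)%nat.
  rewrite E1, E2, plus_IZR. pose proof (p2_pos (L1 + L2)). field. lra.
Qed.

Lemma dyadic_opp x : dyadic x -> dyadic (- x).
Proof. intros [m [k ->]]. exists (- m)%Z, k. rewrite opp_IZR. pose proof (p2_pos k). field. lra. Qed.

Lemma dyadic_scale a x : dyadic x -> dyadic (powerRZ 2 a * x).
Proof.
  intros [m [k ->]]. destruct (Z_le_gt_dec 0 a).
  - exists (m * zp (Z.to_nat a))%Z, k.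
    assert (Ha : powerRZ 2 a = 2 ^ (Z.to_nat a)) by (rewrite pow_powerRZ, Z2Nat.id by lia; reflexivity).
    rewrite Ha, mult_IZR, IZR_zp. pose proof (p2_pos k). field. lra.
  - exists m, (k + Z.to_nat (- a))%nat.
    assert (Ha : powerRZ 2 a = / 2 ^ (Z.to_nat (- a))).
    { rewrite pow_powerRZ, Z2Nat.id by lia. rewrite <- powerRZ_neg'. f_equal. lia. }
    rewrite Ha, pow_add. pose proof (p2_pos k). pose proof (p2_pos (Z.to_nat (-a))). field. lra.
Qed.

Lemma nat_bound (P : nat -> nat -> Prop) N :
  (forall j k k', (k <= k')%nat -> P j k -> P j k') ->
  (forall j, (j <= N)%nat -> exists k, P j k) -> exists K, forall j, (j <= N)%nat -> P j K.
Proof.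
  intros Hm H. induction N.
  - destruct (H 0%nat ltac:(lia)) as [k Hk]. exists k. intros j Hj. replace j with 0%nat by lia. auto.
  - destruct IHN as [K HK]. { intros j Hj; apply H; lia. }
    destruct (H (S N) ltac:(lia)) as [k Hk]. exists (Nat.max K k). intros j Hj.
    destruct (Nat.eq_dec j (S N)) as [->|Hne].
    + apply Hm with k; auto; lia.
    + apply Hm with K; [lia| apply HK; lia].
Qed.

Section PLData.
Variable f : R -> R.
Variable N : nat.
Variable x : nat -> R.
Variable a : nat -> Z.
Variable b : nat -> R.
Hypothesis Hx0 : x 0%nat = 0.
Hypothesis HxN : x N = 1.
Hypothesis Hdy : forall i, (i <= N)%nat -> dyadic (x i).
Hypothesis Hinc : forall i, (i < N)%nat -> x i < x (S i).
Hypothesis Hpc : forall i, (i < N)%nat -> forall t, x i <= t <= x (S i) -> f t = powerRZ 2 (a i) * t + b i.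

Lemma x_nonneg j : (j <= N)%nat -> 0 <= x j.
Proof.
  induction j; intro Hj; [lra|]. specialize (Hinc j ltac:(lia)). specialize (IHj ltac:(lia)). lra.
Qed.

Lemma piece_step j : (j < N)%nat -> f (x (S j)) = f (x j) + powerRZ 2 (a j) * (x (S j) - x j).
Proof.
  intro Hj. pose proof (Hinc j Hj).
  rewrite (Hpc j Hj (x (S j))) by lra. rewrite (Hpc j Hj (x j)) by lra. ring.
Qed.

Lemma piece_mono j t : (j < N)%nat -> x j <= t <= x (S j) -> f (x j) <= f t <= f (x (S j)).
Proof.
  intros Hj Ht. pose proof (Hinc j Hj). pose proof (powerRZ_2_pos (a j)).
  rewrite (Hpc j Hj t) by lra. rewrite (Hpc j Hj (x j)) by lra. rewrite (Hpc j Hj (x (S j))) by lra.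
  split; apply Rplus_le_compat_r; apply Rmult_le_compat_l; lra.
Qed.

Lemma PL_mono j : (j <= N)%nat -> forall t, 0 <= t <= x j -> f 0 <= f t <= f (x j).
Proof.
  induction j; intros Hj t Ht.
  - rewrite Hx0 in *. replace t with 0 by lra. lra.
  - pose proof (Hinc j ltac:(lia)).
    assert (IH := IHj ltac:(lia)).
    pose proof (piece_mono j (x (S j)) ltac:(lia) ltac:(lra)).
    destruct (Rle_dec t (x j)).
    + specialize (IH t ltac:(lra)). lra.
    + pose proof (piece_mono j t ltac:(lia) ltac:(lra)).
      specialize (IH (x j) ltac:(pose proof (x_nonneg j ltac:(lia)); lra)). lra.
Qed.

Hypothesis Hb : bij01 f.

Lemma PL_f0 : f 0 = 0.
Proof.
  destruct Hb as [Hr [_ Hs]]. destruct (Hs 0 ltac:(lra)) as [y [Hy Hfy]].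
  pose proof (PL_mono N ltac:(lia) y ltac:(rewrite HxN; lra)).
  pose proof (Hr 0 ltac:(lra)). lra.
Qed.

Lemma PL_f1 : f 1 = 1.
Proof.
  destruct Hb as [Hr [_ Hs]]. destruct (Hs 1 ltac:(lra)) as [y [Hy Hfy]].
  pose proof (PL_mono N ltac:(lia) y ltac:(rewrite HxN; lra)). rewrite HxN in H.
  pose proof (Hr 1 ltac:(lra)). lra.
Qed.

Lemma fx_dyadic j : (j <= N)%nat -> dyadic (f (x j)).
Proof.
  induction j; intro Hj.
  - rewrite Hx0, PL_f0. exists 0%Z, 0%nat. simpl. lra.
  - rewrite piece_step by lia. apply dyadic_add; [apply IHj; lia|].
    apply dyadic_scale. unfold Rminus. apply dyadic_add; [apply Hdy; lia| apply dyadic_opp, Hdy; lia].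
Qed.

Lemma piece_of c : 0 <= c < 1 -> exists j, (j < N)%nat /\ x j <= c < x (S j).
Proof.
  intro Hc.
  assert (H : forall m, (m <= N)%nat -> c < x m -> exists j, (j < m)%nat /\ x j <= c < x (S j)).
  { induction m; intros Hm Hcm.
    - rewrite Hx0 in Hcm. lra.
    - destruct (Rlt_dec c (x m)).
      + destruct (IHm ltac:(lia) r) as [j [Hj1 Hj2]]. exists j. split; auto; lia.
      + exists m. split; [lia| lra]. }
  destruct (H N ltac:(lia) ltac:(rewrite HxN; lra)) as [j [Hj1 Hj2]]. exists j; auto.
Qed.

Lemma PL_TP : exists L, TP f L 0.
Proof.
  destruct (nat_bound (fun j k => lvl k (x j) /\ lvl k (f (x j))) N) as [L0 HL0].
  { intros j k k' Hk [H1 H2]. split; eapply lvl_mono; eauto. }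
  { intros j Hj. destruct (dyadic_lvl _ (Hdy j Hj)) as [k1 H1].
    destruct (dyadic_lvl _ (fx_dyadic j Hj)) as [k2 H2].
    exists (Nat.max k1 k2). split; [apply (lvl_mono k1); [lia|auto] | apply (lvl_mono k2); [lia|auto]]. }
  destruct (nat_bound (fun j k => (j < N)%nat -> (a j <= Z.of_nat k)%Z) N) as [A HA].
  { intros j k k' Hk H Hj. specialize (H Hj). lia. }
  { intros j Hj. exists (Z.to_nat (a j)). intro. lia. }
  cbv beta in HL0, HA.
  exists (L0 + A)%nat. set (L := (L0 + A)%nat).
  intros i Hi.
  pose proof (p2_pos L) as HpL.
  assert (Hc : 0 <= IZR i / 2 ^ L < 1).
  { split. - apply Rmult_le_pos; [apply IZR_le; lia| left; apply Rinv_0_lt_compat; lra].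
    - assert (IZR i + 1 <= 2 ^ L) by (rewrite <- IZR_zp, <- plus_IZR; apply IZR_le; lia).
      apply Rmult_lt_reg_r with (2 ^ L); [lra|]. field_simplify; lra. }
  destruct (piece_of _ Hc) as [j [Hj [Hxj1 Hxj2]]].
  destruct (HL0 j ltac:(lia)) as [Hl1 Hl2]. unfold lvl in Hl1, Hl2.
  destruct Hl1 as [z1 Ez1]. destruct Hl2 as [w Ew].
  destruct (HL0 (S j) ltac:(lia)) as [Hl3 _]. unfold lvl in Hl3. destruct Hl3 as [z2 Ez2].
  assert (Hz1 : lvl L (x j)) by (apply lvl_up; exists z1; auto).
  assert (Hz2 : lvl L (x (S j))) by (apply lvl_up; exists z2; auto).
  unfold lvl in Hz1, Hz2. destruct Hz1 as [y1 Ey1]. destruct Hz2 as [y2 Ey2].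
  assert (Hiy2 : (i + 1 <= y2)%Z).
  { pose proof Hxj2 as Hlt. rewrite Ey2 in Hlt.
    apply Rmult_lt_compat_r with (r := 2 ^ L) in Hlt; [|lra].
    field_simplify in Hlt; try lra. apply lt_IZR in Hlt. lia. }
  assert (Hy1i : (y1 <= i)%Z).
  { rewrite Ey1 in Hxj1. apply Rmult_le_compat_r with (r := 2 ^ L) in Hxj1; [|lra].
    field_simplify in Hxj1; try lra. apply le_IZR in Hxj1. lia. }
  specialize (HA j ltac:(lia) Hj).
  set (d := Z.to_nat (Z.of_nat A - a j)).
  set (M := (L0 + d)%nat).
  assert (HaM : a j = (Z.of_nat L - Z.of_nat M)%Z) by (unfold M, d, L; lia).
  exists M, (w * zp d + (i - y1))%Z. split; [lia|].
  intros t Ht.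
  assert (Ht' : x j <= t <= x (S j)).
  { rewrite Ey1, Ey2. destruct Ht as [Ht1 Ht2]. split.
    - apply Rle_trans with (IZR i / 2 ^ L); auto.
      unfold Rdiv. apply Rmult_le_compat_r; [left; apply Rinv_0_lt_compat; lra| apply IZR_le; lia].
    - apply Rle_trans with ((IZR i + 1) / 2 ^ L); auto.
      unfold Rdiv. apply Rmult_le_compat_r; [left; apply Rinv_0_lt_compat; lra|].
      rewrite <- plus_IZR. apply IZR_le; lia. }
  assert (Hft : f t = f (x j) + powerRZ 2 (a j) * (t - x j)).
  { pose proof (Hinc j Hj). rewrite (Hpc j Hj t Ht'). rewrite (Hpc j Hj (x j)) by lra. ring. }
  rewrite Hft, Ew, Ey1, HaM, powerRZ_sub.
  rewrite plus_IZR, minus_IZR, mult_IZR, IZR_zp.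
  assert (HM : 2 ^ M = 2 ^ L0 * 2 ^ d) by (unfold M; apply pow_add).
  rewrite HM. pose proof (p2_pos L0). pose proof (p2_pos d).
  field. lra.
Qed.

End PLData.

Lemma TP_choice f N L : TP f N L -> exists F : Z -> nat * Z,
  forall i, (0 <= i < zp N)%Z -> maps f N i (fst (F i)) (snd (F i)).
Proof.
  intro H.
  destruct (functional_choice (fun i (y : nat * Z) => (0 <= i < zp N)%Z -> maps f N i (fst y) (snd y)))
    as [F HF].
  - intro i. destruct (Z_le_gt_dec 0 i); [destruct (Z_lt_ge_dec i (zp N))|].
    + destruct (H i ltac:(lia)) as [M [p [_ Hm]]]. exists (M, p). auto.
    + exists (0%nat, 0%Z). intro; lia.
    + exists (0%nat, 0%Z). intro; lia.
  - exists F. exact HF.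
Qed.

Lemma TP_PL f N L : TP f N L -> PL_dyadic f.
Proof.
  intro H. destruct (TP_choice f N L H) as [F HF].
  pose proof (p2_pos N) as HpN. pose proof (zp_pos N).
  exists (Z.to_nat (zp N)), (fun j => IZR (Z.of_nat j) / 2 ^ N),
    (fun j => Z.of_nat N - Z.of_nat (fst (F (Z.of_nat j))))%Z,
    (fun j => IZR (snd (F (Z.of_nat j))) / 2 ^ (fst (F (Z.of_nat j)))
              - IZR (Z.of_nat j) / 2 ^ N * 2 ^ N / 2 ^ (fst (F (Z.of_nat j)))).
  repeat split.
  - simpl. lra.
  - rewrite Z2Nat.id by lia. rewrite IZR_zp. field. lra.
  - intros i _. exists (Z.of_nat i), N. reflexivity.
  - intros i _. rewrite Nat2Z.inj_succ, succ_IZR. apply Rmult_lt_compat_r; [apply Rinv_0_lt_compat|]; lra.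
  - intros i Hi t Ht. rewrite powerRZ_sub.
    rewrite Nat2Z.inj_succ, succ_IZR in Ht.
    rewrite (HF (Z.of_nat i) ltac:(lia) t Ht).
    pose proof (p2_pos (fst (F (Z.of_nat i)))). field. lra.
Qed.

Lemma inF_facts f : inF f -> f 0 = 0 /\ f 1 = 1 /\ exists N, TP f N 0.
Proof.
  intros [Hout [Hb [N [x [a [b [H0 [H1 [Hd [Hi Hp]]]]]]]]]].
  split; [|split].
  - apply (PL_f0 f N x a b H0 H1 Hi Hp Hb).
  - apply (PL_f1 f N x a b H0 H1 Hi Hp Hb).
  - apply (PL_TP f N x a b H0 H1 Hd Hi Hp Hb).
Qed.

Lemma inF_comp f g : inF f -> inF g -> inF (comp f g).
Proof.
  intros Hf Hg. destruct (inF_facts f Hf) as [_ [_ [Nf Tf]]]. destruct (inF_facts g Hg) as [_ [_ [Ng Tg]]].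
  destruct Hf as [Of [[Rf [If Sf]] _]]. destruct Hg as [Og [[Rg [Ig Sg]] _]].
  split; [|split; [split; [|split]|]].
  - intros t Ht. unfold comp. rewrite Og by auto. apply Of; auto.
  - intros t Ht. unfold comp. apply Rf. apply Rg. exact Ht.
  - intros s t Hs Ht E. apply Ig; [exact Hs| exact Ht|]. apply If; [apply Rg; exact Hs| apply Rg; exact Ht| exact E].
  - intros y Hy. destruct (Sf y Hy) as [z [Hz Ez]]. destruct (Sg z Hz) as [t [Ht Et]].
    exists t. split; auto. unfold comp. rewrite Et; auto.
  - apply (TP_PL _ (Ng + Nf) 0). apply TP_comp; auto.
Qed.

Lemma inF_inv f g : inF f -> (forall x, g (f x) = x) -> inF g.
Proof.
  intros Hf Hg. destruct (inF_facts f Hf) as [_ [_ [N Tf]]].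
  destruct Hf as [Of [Bf _]].
  pose proof Bf as [Rf [If Sf]].
  split; [|split; [split; [|split]|]].
  - intros t Ht. rewrite <- (Of t Ht) at 1. rewrite Hg. auto.
  - intros y Hy. destruct (Sf y Hy) as [x [Hx <-]]. rewrite Hg. auto.
  - intros y1 y2 H1 H2 E. destruct (Sf y1 H1) as [x1 [Hx1 <-]]. destruct (Sf y2 H2) as [x2 [Hx2 <-]].
    rewrite !Hg in E. now subst.
  - intros x Hx. exists (f x). split; [apply Rf; auto| apply Hg].
  - destruct (TP_inv f g N Tf Bf Hg) as [L HL]. apply (TP_PL g L 0 HL).
Qed.

Definition Slope0 (f : R -> R) (s : Z) : Prop :=
  exists eps, 0 < eps /\ forall t, 0 <= t <= eps -> f t = powerRZ 2 s * t.
Definition Slope1 (f : R -> R) (s : Z) : Prop :=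
  exists eps, 0 < eps /\ forall t, 1 - eps <= t <= 1 -> f t = 1 - powerRZ 2 s * (1 - t).

Lemma inF_slope0 f : inF f -> exists s, Slope0 f s.
Proof.
  intro Hf. destruct (inF_facts f Hf) as [F0 [_ [N T]]].
  destruct (T 0%Z ltac:(pose proof (zp_pos N); lia)) as [M [p [_ Hm]]].
  pose proof (p2_pos N). pose proof (p2_pos M).
  assert (Hp : IZR p / 2 ^ M = 0).
  { rewrite <- F0. rewrite (Hm 0). - simpl. field. lra.
    - simpl. split; [unfold Rdiv; lra|]. apply Rmult_le_pos; [lra| left; apply Rinv_0_lt_compat; lra]. }
  exists (Z.of_nat N - Z.of_nat M)%Z, (1 / 2 ^ N). split; [apply Rdiv_lt_0_compat; lra|].
  intros t Ht. rewrite (Hm t).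
  - rewrite Hp, powerRZ_sub. simpl. field. lra.
  - simpl. split; [unfold Rdiv; lra| lra].
Qed.

Lemma inF_slope1 f : inF f -> exists s, Slope1 f s.
Proof.
  intro Hf. destruct (inF_facts f Hf) as [_ [F1 [N T]]].
  pose proof (zp_pos N).
  destruct (T (zp N - 1)%Z ltac:(lia)) as [M [p [_ Hm]]].
  pose proof (p2_pos N). pose proof (p2_pos M).
  unfold maps in Hm. rewrite minus_IZR, IZR_zp in Hm.
  assert (Hp : IZR p / 2 ^ M + 1 / 2 ^ M = 1).
  { assert (H1c : (2 ^ N - 1) / 2 ^ N <= 1 <= (2 ^ N - 1 + 1) / 2 ^ N) by (split; [apply mul_le_div; lra| right; field; lra]).
    pose proof (Hm 1 H1c) as E. rewrite F1 in E.
    replace ((1 - (2 ^ N - 1) / 2 ^ N) * 2 ^ N / 2 ^ M) with (1 / 2 ^ M) in E by (field; lra). lra. }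
  exists (Z.of_nat N - Z.of_nat M)%Z, (1 / 2 ^ N). split; [apply Rdiv_lt_0_compat; lra|].
  intros t Ht. rewrite (Hm t).
  - rewrite powerRZ_sub. replace (IZR p / 2 ^ M) with (1 - 1 / 2 ^ M) by lra. field. lra.
  - split.
    + replace ((2 ^ N - 1) / 2 ^ N) with (1 - 1 / 2 ^ N) by (field; lra). lra.
    + replace ((2 ^ N - 1 + 1) / 2 ^ N) with 1 by (field; lra). lra.
Qed.

Lemma Slope0_comp f g s r : Slope0 f s -> Slope0 g r -> Slope0 (comp f g) (s + r).
Proof.
  intros [e1 [He1 H1]] [e2 [He2 H2]].
  pose proof (powerRZ_2_pos r) as Pr.
  exists (Rmin e2 (e1 / powerRZ 2 r)). split.
  - apply Rmin_glb_lt; auto. apply Rdiv_lt_0_compat; lra.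
  - intros t Ht. unfold comp.
    assert (Ht2 : t <= e2) by (apply Rle_trans with (1 := proj2 Ht); apply Rmin_l).
    assert (Ht1 : t <= e1 / powerRZ 2 r) by (apply Rle_trans with (1 := proj2 Ht); apply Rmin_r).
    rewrite H2 by lra. rewrite H1.
    + rewrite powerRZ_add by lra. ring.
    + split; [apply Rmult_le_pos; lra|].
      apply le_div_mul in Ht1; [|lra]. lra.
Qed.

Lemma Slope0_inv f g s : Slope0 f s -> (forall x, g (f x) = x) -> Slope0 g (- s).
Proof.
  intros [e [He H]] Hg. pose proof (powerRZ_2_pos s) as Ps.
  exists (powerRZ 2 s * e). split; [apply Rmult_lt_0_compat; lra|].
  intros y Hy. rewrite powerRZ_neg'.
  set (x := y / powerRZ 2 s).
  assert (Hx : 0 <= x <= e).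
  { unfold x. split; [apply Rmult_le_pos; [lra| left; apply Rinv_0_lt_compat; lra]|].
    apply mul_le_div; lra. }
  assert (Hfx : f x = y) by (rewrite H by auto; unfold x; field; lra).
  rewrite <- Hfx at 1. rewrite Hg. unfold x. field. lra.
Qed.

Lemma Slope1_comp f g s r : Slope1 f s -> Slope1 g r -> Slope1 (comp f g) (s + r).
Proof.
  intros [e1 [He1 H1]] [e2 [He2 H2]].
  pose proof (powerRZ_2_pos r) as Pr.
  exists (Rmin e2 (e1 / powerRZ 2 r)). split.
  - apply Rmin_glb_lt; auto. apply Rdiv_lt_0_compat; lra.
  - intros t Ht. unfold comp.
    assert (Ht2 : 1 - t <= e2) by (pose proof (Rmin_l e2 (e1 / powerRZ 2 r)); lra).
    assert (Ht1 : 1 - t <= e1 / powerRZ 2 r) by (pose proof (Rmin_r e2 (e1 / powerRZ 2 r)); lra).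
    rewrite H2 by lra. rewrite H1.
    + rewrite powerRZ_add by lra. ring.
    + apply le_div_mul in Ht1; [|lra].
      assert (0 <= powerRZ 2 r * (1 - t)) by (apply Rmult_le_pos; lra). lra.
Qed.

Lemma Slope1_inv f g s : Slope1 f s -> (forall x, g (f x) = x) -> Slope1 g (- s).
Proof.
  intros [e [He H]] Hg. pose proof (powerRZ_2_pos s) as Ps.
  exists (powerRZ 2 s * e). split; [apply Rmult_lt_0_compat; lra|].
  intros y Hy. rewrite powerRZ_neg'.
  set (x := 1 - (1 - y) / powerRZ 2 s).
  assert (Hx : 1 - e <= x <= 1).
  { unfold x. assert (0 <= (1 - y) / powerRZ 2 s <= e); [|lra].
    split; [apply Rmult_le_pos; [lra| left; apply Rinv_0_lt_compat; lra]|].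
    apply mul_le_div; lra. }
  assert (Hfx : f x = y) by (rewrite H by auto; unfold x; field; lra).
  rewrite <- Hfx at 1. rewrite Hg. unfold x. field. lra.
Qed.

Lemma Slope0_ext f s s' : Slope0 f s -> s = s' -> Slope0 f s'.
Proof. intros H ->; exact H. Qed.
Lemma Slope1_ext f s s' : Slope1 f s -> s = s' -> Slope1 f s'.
Proof. intros H ->; exact H. Qed.

Definition Good (f : R -> R) : Prop := inF f /\ Slope0 f 0 /\ Slope1 f 0.

Lemma inF_id : inF (fun x => x).
Proof.
  split; [auto|split].
  - split; [auto| split; [auto| intros y Hy; exists y; auto]].
  - exists 1%nat, (fun j => INR j), (fun _ => 0%Z), (fun _ => 0).
    repeat split.
    + intros i Hi. exists (Z.of_nat i), 0%nat. simpl. rewrite <- INR_IZR_INZ. field.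
    + intros i Hi. rewrite S_INR. lra.
    + intros i Hi t Ht. simpl. ring.
Qed.

Lemma Good_id : Good (fun x => x).
Proof.
  split; [apply inF_id| split].
  - exists 1. split; [lra|]. intros; simpl; ring.
  - exists 1. split; [lra|]. intros; simpl; ring.
Qed.

Lemma Good_comp f g : Good f -> Good g -> Good (comp f g).
Proof.
  intros [F1 [A1 B1]] [F2 [A2 B2]]. split; [apply inF_comp; auto| split].
  - apply (Slope0_ext _ (0 + 0)); [apply Slope0_comp; auto| reflexivity].
  - apply (Slope1_ext _ (0 + 0)); [apply Slope1_comp; auto| reflexivity].
Qed.

Lemma Good_inv f g : Good f -> (forall x, g (f x) = x) -> Good g.
Proof.
  intros [F1 [A1 B1]] Hg. split; [apply (inF_inv f); auto| split].
  - apply (Slope0_ext _ (- 0)); [apply (Slope0_inv f); auto| reflexivity].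
  - apply (Slope1_ext _ (- 0)); [apply (Slope1_inv f); auto| reflexivity].
Qed.

Lemma Good_comm a a' b b' : inF a -> inF b -> (forall x, a' (a x) = x) -> (forall x, b' (b x) = x) ->
  Good (comp a' (comp b' (comp a b))).
Proof.
  intros Ha Hb Ha' Hb'.
  destruct (inF_slope0 a Ha) as [sa Sa]. destruct (inF_slope0 b Hb) as [sb Sb].
  destruct (inF_slope1 a Ha) as [ta Ta]. destruct (inF_slope1 b Hb) as [tb Tb].
  split; [|split].
  - apply inF_comp; [apply (inF_inv a); auto|]. apply inF_comp; [apply (inF_inv b); auto|].
    apply inF_comp; auto.
  - apply (Slope0_ext _ (- sa + (- sb + (sa + sb)))); [|ring].
    apply Slope0_comp; [apply (Slope0_inv a); auto|]. apply Slope0_comp; [apply (Slope0_inv b); auto|].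
    apply Slope0_comp; auto.
  - apply (Slope1_ext _ (- ta + (- tb + (ta + tb)))); [|ring].
    apply Slope1_comp; [apply (Slope1_inv a); auto|]. apply Slope1_comp; [apply (Slope1_inv b); auto|].
    apply Slope1_comp; auto.
Qed.

Lemma derived_Good f : derivedF f -> Good f.
Proof.
  induction 1.
  - apply Good_comm; auto.
  - apply Good_id.
  - apply Good_comp; auto.
  - apply (Good_inv f); auto.
Qed.

Fixpoint word (N : nat) (i : Z) : list bool :=
  match N with
  | O => nil
  | S N' => if Z.ltb i (zp N') then false :: word N' i else true :: word N' (i - zp N')
  end.

Lemma word_len N i : length (word N i) = N.
Proof. revert i; induction N; intro i; simpl; [reflexivity|]. destruct (Z.ltb i (zp N)); simpl; rewrite IHN; reflexivity. Qed.

Lemma word_val N : forall i, (0 <= i < zp N)%Z -> val (word N i) = IZR i / 2 ^ N.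
Proof.
  induction N; intros i Hi.
  - simpl. unfold zp in Hi. simpl in Hi. replace i with 0%Z by lia. simpl. lra.
  - simpl. rewrite zp_S in Hi. pose proof (p2_pos N).
    destruct (Z.ltb_spec i (zp N)).
    + simpl. rewrite IHN by lia. field. lra.
    + simpl. rewrite IHN by lia. rewrite minus_IZR, IZR_zp. field. lra.
Qed.

Lemma word_true N : forall i, (1 <= i < zp N)%Z -> In true (word N i).
Proof.
  induction N; intros i Hi.
  - unfold zp in Hi; simpl in Hi; lia.
  - simpl. rewrite zp_S in Hi. destruct (Z.ltb_spec i (zp N)).
    + right. apply IHN. lia.
    + left. reflexivity.
Qed.

Lemma word_false N : forall i, (0 <= i <= zp N - 2)%Z -> In false (word N i).
Proof.
  induction N; intros i Hi.
  - unfold zp in Hi; simpl in Hi; lia.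
  - simpl. rewrite zp_S in Hi. destruct (Z.ltb_spec i (zp N)).
    + left. reflexivity.
    + right. apply IHN. lia.
Qed.

Lemma small_pow e : 0 < e -> exists D, forall N, (D <= N)%nat -> 1 / 2 ^ N <= e.
Proof.
  intro He. destruct (pow_lt_1_zero (/ 2) ltac:(rewrite Rabs_pos_eq; lra) e He) as [D HD].
  exists D. intros N HN. specialize (HD N HN). rewrite Rabs_pos_eq in HD by (apply pow_le; lra).
  rewrite <- Rinv_pow in HD by lra. unfold Rdiv. rewrite Rmult_1_l. lra.
Qed.

Lemma Good_K n K : (1 <= n)%nat -> closed_subgroup K -> Knn_conditions n K -> forall f, Good f -> K f.
Proof.
  intros Hn [HK Hcl] HC f [HF [[e0 [He0 S0]] [e1 [He1 S1]]]].
  destruct (inF_facts f HF) as [F0 [F1 [N0 T0]]].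
  destruct (small_pow (Rmin e0 e1)) as [D HD]; [apply Rmin_glb_lt; auto|].
  set (N := (N0 + D)%nat).
  assert (T : TP f N 0) by (apply TP_weaken with D; [apply (TP_refine_d f N0 0 D T0)| lia]).
  assert (HsN : 1 / 2 ^ N <= e0 /\ 1 / 2 ^ N <= e1).
  { specialize (HD N ltac:(unfold N; lia)). pose proof (Rmin_l e0 e1). pose proof (Rmin_r e0 e1). lra. }
  pose proof (p2_pos N) as HpN. pose proof (zp_pos N) as HzN.
  pose proof HF as HF'.
  destruct HF as [Hout [[Hr [Hinj Hsurj]] HPL]].
  apply Hcl. unfold Cl. split; [exact HF'|].
  exists (Z.to_nat (zp N)), (fun j => IZR (Z.of_nat j) / 2 ^ N).
  split; [simpl; lra|]. split.
  { rewrite Z2Nat.id by lia. rewrite IZR_zp. field. lra. }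
  split.
  { intros j _. rewrite Nat2Z.inj_succ, succ_IZR. apply Rmult_lt_compat_r; [apply Rinv_0_lt_compat|]; lra. }
  intros j Hj. rewrite Nat2Z.inj_succ, succ_IZR.
  set (i := Z.of_nat j).
  assert (Hi : (0 <= i < zp N)%Z) by (unfold i; lia).
  pose proof HK as [HKF [HKid [HKc HKi]]].
  destruct (Z.eq_dec i 0) as [Hi0|Hi0].
  { exists (fun x => x). split; auto. intros t Ht. rewrite Hi0 in Ht. simpl in Ht.
    rewrite S0; [simpl; ring|]. split; [unfold Rdiv in Ht; lra|]. lra. }
  destruct (Z.eq_dec i (zp N - 1)) as [Hi1|Hi1].
  { exists (fun x => x). split; auto. intros t Ht. rewrite Hi1, minus_IZR, IZR_zp in Ht.
    rewrite S1; [simpl; ring|].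
    replace ((2 ^ N - 1) / 2 ^ N) with (1 - 1 / 2 ^ N) in Ht by (field; lra).
    replace ((2 ^ N - 1 + 1) / 2 ^ N) with 1 in Ht by (field; lra). lra. }
  destruct (T i Hi) as [M [p [_ Hm]]].
  assert (Hr' : forall t, 0 <= t <= 1 -> 0 <= f t <= 1) by exact Hr.
  destruct (maps_image_range f N i M p Hi Hm Hr') as [Hp0 Hp1].
  pose proof (p2_pos M) as HpM.
  destruct (cell_range N i Hi) as [CR1 CR2].
  assert (Hcl1 : IZR i / 2 ^ N <= IZR i / 2 ^ N <= (IZR i + 1) / 2 ^ N).
  { split; [lra|]. apply mul_le_div; [lra|]. field_simplify; lra. }
  assert (Hcl2 : IZR i / 2 ^ N <= (IZR i + 1) / 2 ^ N <= (IZR i + 1) / 2 ^ N).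
  { split; [|lra]. apply mul_le_div; [lra|]. field_simplify; lra. }
  assert (Hp0' : (1 <= p)%Z).
  { destruct (Z.eq_dec p 0) as [E|E]; [|lia]. exfalso. apply Hi0.
    pose proof (Hm _ Hcl1) as E1. rewrite E in E1.
    replace (IZR 0 / 2 ^ M + (IZR i / 2 ^ N - IZR i / 2 ^ N) * 2 ^ N / 2 ^ M) with 0 in E1 by (simpl; field; lra).
    assert (E2 : f (IZR i / 2 ^ N) = f 0) by (rewrite F0; exact E1).
    apply Hinj in E2; [|lra|lra]. clear E1. rename E2 into E1.
    apply eq_IZR. apply Rmult_eq_reg_r with (/ 2 ^ N); [|apply Rinv_neq_0_compat; lra].
    simpl. unfold Rdiv in E1. lra. }
  assert (Hp1' : (p + 2 <= zp M)%Z).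
  { destruct (Z.eq_dec (p + 1) (zp M)) as [E|E]; [|lia]. exfalso. apply Hi1.
    pose proof (Hm _ Hcl2) as E1.
    replace (IZR p / 2 ^ M + ((IZR i + 1) / 2 ^ N - IZR i / 2 ^ N) * 2 ^ N / 2 ^ M) with (IZR (p + 1) / 2 ^ M) in E1
      by (rewrite plus_IZR; field; lra).
    rewrite E, IZR_zp in E1. replace (2 ^ M / 2 ^ M) with 1 in E1 by (field; lra).
    assert (E2 : f ((IZR i + 1) / 2 ^ N) = f 1) by (rewrite F1; exact E1).
    apply Hinj in E2; [|lra|lra].
    assert (IZR i + 1 = 2 ^ N) by (apply (Rmult_eq_reg_r (/ 2 ^ N)); [unfold Rdiv in E2; rewrite Rinv_r; lra| apply Rinv_neq_0_compat; lra]).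
    rewrite <- IZR_zp in H. assert (IZR (i + 1) = IZR (zp N)) by (rewrite plus_IZR; auto).
    apply eq_IZR in H0. lia. }
  assert (Sim : sim K (word N i) (word M p)).
  { apply (sim_trans HK) with (Zw 2).
    - apply (nb_sim n Hn K HK HC); [apply word_true; lia| apply word_false; lia].
    - apply (sim_sym HK). apply (nb_sim n Hn K HK HC); [apply word_true; lia| apply word_false; lia]. }
  destruct Sim as [h [Kh Bh]]. exists h. split; auto.
  intros t Ht.
  destruct (cell_mul N i t Ht) as [Cm1 Cm2].
  set (s := t * 2 ^ N - IZR i).
  destruct (bin_val_surj s ltac:(unfold s; lra)) as [a Ha].
  assert (Et : t = bin_val (prepend (word N i) a)).
  { rewrite bin_val_prepend, word_len, word_val, Ha by auto. unfold s. field. lra. }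
  rewrite Et at 2. rewrite Bh. rewrite bin_val_prepend, word_len, word_val, Ha by lia.
  rewrite (Hm t Ht). unfold s. field. lra.
Qed.

Theorem proposition3p6 (n : nat) (Hn : (1 <= n)%nat) (K : (R -> R) -> Prop) :
  is_Knn n K -> forall f, derivedF f -> K f.
Proof.
  intros [Hcs [HC _]] f Hf. apply (Good_K n K Hn Hcs HC). apply derived_Good. exact Hf.
Qed.
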